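(* Let $x\in\mathfrak{g}=\mathfrak{gl}(n+1,\mathbb{C})$ be regular nilpotent and suppose $x\in\mathfrak{b}$ for a Borel subalgebra $\mathfrak{b}\in Q_{+,n+1}\cup Q_{-,n+1}$. Then $x_n$ is regular nilpotent in $\mathfrak{g}_n$ and $\mathfrak{z}_{\mathfrak{g}_n}(x_n)\cap\mathfrak{z}_{\mathfrak{g}}(x)=0$.
   Context: $n\ge1$. $\mathfrak{g}_n\cong\mathfrak{gl}(n,\mathbb{C})$ is embedded in $\mathfrak{g}$ as matrices supported in the upper left $n\times n$ corner, $x_n$ is the upper left $n\times n$ submatrix of $x$ (viewed in $\mathfrak{g}_n$), and $\mathfrak{z}$ denotes centralizers. $K_{n+1}=GL(n,\mathbb{C})\times GL(1,\mathbb{C})$ is the group of invertible block diagonal matrices with blocks of sizes $n$ and $1$, acting by conjugation on the flag variety $\mathcal{B}_{n+1}$ of $\mathfrak{g}$. $Q_{+,n+1}$ (resp. $Q_{-,n+1}$) is the $K_{n+1}$-orbit of the Borel subalgebra of upper (resp. lower) triangular matrices. *)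

(* Defs.v *)
From HB Require Import structures.
From mathcomp Require Import all_boot all_order all_algebra.
From mathcomp Require Import complex.
From mathcomp Require Import Rstruct.
Set Implicit Arguments. Unset Strict Implicit. Unset Printing Implicit Defensive.
Import Order.TTheory GRing.Theory Num.Theory.
Local Open Scope ring_scope.

Notation CC := (complex Rdefinitions.R).
Definition CC_closed : closedFieldType := CC.

Definition nilpotent_mx m (x : 'M[CC]_m) : Prop := exists k : nat, x ^+ k = 0.

(* dimension of the centralizer z_{gl(m)}(x) = {y | y x = x y} *)
Definition centralizer_dim m (x : 'M[CC]_m) : nat := \rank (cent_mx (mxvec x)).

(* regular: dim z(x) = rank of gl(m) = m *)
Definition regular_mx m (x : 'M[CC]_m) : Prop := centralizer_dim x = m.

Definition regular_nilpotent m (x : 'M[CC]_m) : Prop :=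
  nilpotent_mx x /\ regular_mx x.

(* upper / lower triangular matrices (Borel subalgebras b_+ and b_-) *)
Definition upper_tri m (y : 'M[CC]_m) : Prop := forall i j : 'I_m, (j < i)%N -> y i j = 0.
Definition lower_tri m (y : 'M[CC]_m) : Prop := forall i j : 'I_m, (i < j)%N -> y i j = 0.

(* K_{n+1} = GL(n) x GL(1): invertible block diagonal matrices, blocks n and 1 *)
Definition in_K n (k : 'M[CC]_n.+1) : Prop :=
  k \in unitmx /\
  forall i j : 'I_n.+1, (i == ord_max) != (j == ord_max) -> k i j = 0.

(* x belongs to a Borel subalgebra in Q_+ = K.b_+ (resp. Q_- = K.b_-):
   x \in k b_+ k^-1 for some k in K *)
Definition in_borel_Qplus n (x : 'M[CC]_n.+1) : Prop :=
  exists2 k, in_K k & upper_tri (invmx k *m x *m k).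
Definition in_borel_Qminus n (x : 'M[CC]_n.+1) : Prop :=
  exists2 k, in_K k & lower_tri (invmx k *m x *m k).

(* x_n : upper-left n x n submatrix *)
Definition corner n (x : 'M[CC]_n.+1) : 'M[CC]_n :=
  \matrix_(i, j) x (lift ord_max i) (lift ord_max j).

(* embedding g_n -> g as matrices supported in the upper left corner *)
Definition embed n (y : 'M[CC]_n) : 'M[CC]_n.+1 :=
  \matrix_(i, j) match unlift ord_max i, unlift ord_max j with
                 | Some i', Some j' => y i' j'
                 | _, _ => 0
                 end.

(* Main.v *)
From HB Require Import structures.
Require Import Defs.
From mathcomp Require Import all_boot all_order all_algebra.
From mathcomp Require Import complex Rstruct.
From mathcomp Require Import zify.
Set Implicit Arguments. Unset Strict Implicit. Unset Printing Implicit Defensive.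
Import Order.TTheory GRing.Theory Num.Theory.
Local Open Scope ring_scope.



Section Tri.
Variable F : fieldType.

Definition supper N (y : 'M[F]_N) := forall i j : 'I_N, (j <= i)%N -> y i j = 0.

Lemma spow0 N (y : 'M[F]_N.+1) : supper y ->
  forall j (a b : 'I_N.+1), (b < a + j)%N -> (y ^+ j) a b = 0.
Proof.
move=> hy; elim=> [|j IH] a b hb.
  by rewrite expr0 mxE; have -> : (a == b) = false by apply/eqP=> e; subst; lia.
rewrite exprSr -mulmxE mxE big1 // => k _.
case: (ltnP k (a + j)) => hk; first by rewrite IH // mul0r.
by rewrite hy ?mulr0 //; lia.
Qed.

Lemma spowd N (y : 'M[F]_N.+1) : supper y ->
  forall j (a b : 'I_N.+1), (b = a + j :> nat)%N ->
  (y ^+ j) a b = \prod_(t < j) y (inord (a + t)) (inord (a + t).+1).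
Proof.
move=> hy; elim=> [|j IH] a b hb.
  have -> : a = b by apply/val_inj; rewrite /= hb addn0.
  by rewrite expr0 big_ord0 mxE eqxx.
have ha : (a + j < N.+1)%N by have := ltn_ord b; lia.
rewrite exprSr -mulmxE mxE (bigD1 (Ordinal ha)) //= big1 ?addr0.
  rewrite big_ord_recr /= (IH a (Ordinal ha)) //; congr (_ * y _ _);
  apply/val_inj; rewrite /= inordK //; [lia|have := ltn_ord b; lia].
move=> k hk; case: (ltnP k (a + j)) => hk'; first by rewrite spow0 // mul0r.
have : (k != (a + j)%N :> nat) by apply/eqP=> e; move/eqP: hk; apply; apply/val_inj.
by move=> hne; rewrite hy ?mulr0 //; lia.
Qed.


Definition upper N (y : 'M[F]_N) := forall i j : 'I_N, (j < i)%N -> y i j = 0.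

Lemma upow0 N (y : 'M[F]_N) : upper y ->
  forall j (a b : 'I_N), (b < a)%N -> (y ^+ j) a b = 0.
Proof.
move=> hy; elim=> [|j IH] a b hb.
  by rewrite expr0 mxE; have -> : (a == b) = false by apply/eqP=> e; subst; lia.
rewrite exprSr -mulmxE mxE big1 // => k _.
case: (ltnP k a) => hk; first by rewrite IH // mul0r.
by rewrite hy ?mulr0 //; lia.
Qed.

Lemma upowd N (y : 'M[F]_N) : upper y ->
  forall j (a : 'I_N), (y ^+ j) a a = y a a ^+ j.
Proof.
move=> hy; elim=> [|j IH] a; first by rewrite !expr0 mxE eqxx.
rewrite exprSr -mulmxE mxE (bigD1 a) //= big1 ?addr0; first by rewrite IH exprSr.
move=> k hk; case: (ltnP k a) => hk'; first by rewrite upow0 // mul0r.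
have : (k != a :> nat) by apply/eqP=> e; move/eqP: hk; apply; apply/val_inj.
by move=> hne; rewrite hy ?mulr0 //; lia.
Qed.

Lemma upper_nil N (y : 'M[F]_N) k : upper y -> y ^+ k = 0 -> supper y.
Proof.
move=> hy hk i j; rewrite leq_eqVlt => /orP[/eqP e|]; last exact: hy.
have -> : i = j by apply/val_inj.
have := upowd hy k j; rewrite hk mxE => /esym/eqP; rewrite expf_eq0 => /andP[_ /eqP //].
Qed.

Lemma super_nz N (y : 'M[F]_N.+1) : supper y -> y ^+ N != 0 ->
  forall i j : 'I_N.+1, (j = i.+1 :> nat) -> y i j != 0.
Proof.
move=> hy hN i j hij; apply: contra_neq hN => h0.
apply/matrixP=> a b; rewrite mxE.
case: (ltnP b (a + N)) => hb; first by rewrite spow0.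
have ha : a = 0 :> nat by have := ltn_ord b; lia.
rewrite (spowd hy) ?ha; last by have := ltn_ord b; lia.
have hi : (i < N)%N by have := ltn_ord j; lia.
rewrite (bigD1 (Ordinal hi)) //= add0n.
have -> : (inord i : 'I_N.+1) = i by apply/val_inj; rewrite /= inordK.
have -> : (inord i.+1 : 'I_N.+1) = j by apply/val_inj; rewrite /= inordK // -hij.
by rewrite h0 mul0r.
Qed.

Lemma comm_pow N (M y : 'M[F]_N) j : M *m y = y *m M -> M *m y ^+ j = y ^+ j *m M.
Proof.
move=> h; elim: j => [|j IH]; first by rewrite expr0 mulmx1 mul1mx.
by rewrite exprSr -mulmxE mulmxA IH -mulmxA h mulmxA.
Qed.

Lemma sep N (y : 'M[F]_N.+1) (v : 'cV[F]_N.+1) (M : 'M[F]_N.+1) :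
  supper y -> (forall i j : 'I_N.+1, (j = i.+1 :> nat) -> y i j != 0) ->
  v ord_max 0 != 0 -> M *m y = y *m M -> M *m v = 0 -> M = 0.
Proof.
move=> hy hsd hv hc hMv.
have hMp j : M *m (y ^+ j *m v) = 0 by rewrite mulmxA comm_pow // -mulmxA hMv mulmx0.
have hw2 (c a : 'I_N.+1) : (c < a)%N -> (y ^+ (N - c)%N *m v) a 0 = 0.
  move=> ha; rewrite mxE big1 // => b _; rewrite spow0 ?mul0r //.
  have := ltn_ord b; have := ltn_ord c; lia.
have hw1 (c : 'I_N.+1) : (y ^+ (N - c)%N *m v) c 0 != 0.
  rewrite mxE (bigD1 ord_max) //= big1 ?addr0.
    rewrite mulf_neq0 // (spowd hy); last by rewrite /=; have := ltn_ord c; lia.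
    rewrite prodf_seq_neq0; apply/allP => t _; apply/implyP => _.
    have ht := ltn_ord t.
    apply: hsd; rewrite /= !inordK //; have := ltn_ord c; lia.
  move=> b hb; rewrite spow0 ?mul0r //.
  have : (b != N :> nat) by apply/eqP=> e; move/eqP: hb; apply; apply/val_inj.
  have := ltn_ord b; have := ltn_ord c; lia.
suff hcol : forall k (c : 'I_N.+1), (c < k)%N -> col c M = 0.
  apply/matrixP=> i c; have := hcol c.+1 c (ltnSn _).
  by move/matrixP/(_ i 0); rewrite !mxE.
elim=> [//|k IH] c hck.
case: (ltnP c k) => hc'; first exact: IH.
have ec : c = k :> nat by lia.
apply/colP=> i; rewrite !mxE.
have := hMp (N - c)%N; move: (hw1 c) (hw2 c); set w := (y ^+ (N - c)%N *m v).
move=> hw1c hw2c /matrixP/(_ i 0); rewrite !mxE (bigD1 c) //= big1 ?addr0.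
  by move/eqP; rewrite mulf_eq0 (negPf hw1c) orbF => /eqP.
move=> a ha; case: (ltnP a c) => hac.
  by have := IH a; rewrite -ec hac => /(_ isT)/colP/(_ i); rewrite !mxE => ->; rewrite mul0r.
have hac' : (c < a)%N.
  by rewrite ltn_neqAle hac andbT; apply/eqP=> e; move/eqP: ha; apply; apply/val_inj.
by rewrite hw2c // mulr0.
Qed.

End Tri.



Section Dim.
Variable F : fieldType.

Lemma ub N (y : 'M[F]_N) p q (f : {linear 'M[F]_N -> 'M[F]_(p, q)}) :
  (forall M, M *m y = y *m M -> f M = 0 -> M = 0) ->
  (\rank (cent_mx (mxvec y)) <= p * q)%N.
Proof.
move=> h; set C := cent_mx (mxvec y).
rewrite -(mxrank_mul_ker C (lin_mx f)).
have /eqP -> : (C :&: kermx (lin_mx f))%MS == 0.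
  apply/rowV0P => r; rewrite sub_capmx => /andP[hC /sub_kermxP hK].
  rewrite -(vec_mxK r) in hC hK *; set M := vec_mx r in hC hK *.
  have hM : y *m M = M *m y by apply: (cent_mxP hC); exact: submx_refl.
  rewrite mul_vec_lin in hK.
  have hf : f M = 0 by apply/eqP; rewrite -mxvec_eq0 hK.
  by rewrite (h M (esym hM) hf); apply/eqP; rewrite mxvec_eq0.
by rewrite mxrank0 addn0 rank_leq_col.
Qed.

Section Theta.
Variables (N m : nat) (y : 'M[F]_N) (phi : 'rV[F]_N).

Definition Theta (Y : 'M[F]_N) := \sum_(j < m) y ^+ j *m Y *m y ^+ (m.-1 - j).

Lemma theta_comm Y : y ^+ m = 0 -> y *m Theta Y = Theta Y *m y.
Proof.
move=> hm; apply/eqP; rewrite -subr_eq0.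
pose u k := y ^+ k *m Y *m y ^+ (m - k).
rewrite /Theta mulmx_sumr mulmx_suml -sumrB.
rewrite (eq_bigr (fun j : 'I_m => u j.+1 - u j)).
  rewrite -(big_mkord xpredT (fun j => u j.+1 - u j)) telescope_sumr //.
  by rewrite /u hm subnn !mul0mx subn0 hm mulmx0 subrr.
move=> j _; have hj := ltn_ord j; rewrite /u; congr (_ - _).
  rewrite !mulmxA mulmxE -exprS; congr (_ *m _ *m y ^+ _); lia.
rewrite -mulmxA mulmxE -exprSr; congr (_ *m _ *m y ^+ _); lia.
Qed.

Lemma mulmxX a b : y ^+ a *m y ^+ b = y ^+ (a + b).
Proof. by rewrite mulmxE -exprD. Qed.

Lemma pow_big k : y ^+ m = 0 -> (m <= k)%N -> y ^+ k = 0.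
Proof. by move=> hm hk; rewrite -(subnKC hk) exprD hm mul0r. Qed.

Lemma theta_inj (v : 'cV[F]_N) (w : 'cV[F]_N) :
  y ^+ m = 0 -> phi *m y ^+ m.-1 *m v = 1%:M -> (0 < m)%N ->
  Theta (w *m phi) = 0 -> w = 0.
Proof.
move=> hm h1 hm0 hT.
suff Q : forall d j, (m.-1 - d <= j)%N -> y ^+ j *m w = 0.
  by have := Q m.-1 0%N; rewrite subnn expr0 mul1mx; apply.
elim=> [|d IH] j hj.
  case: (ltnP j m) => hjm; last by rewrite pow_big // mul0mx.
  have ej : j = m.-1 by lia.
  have := congr1 (mulmx^~ (y ^+ j *m v)) hT; rewrite mul0mx /Theta mulmx_suml.
  rewrite (bigD1 (Ordinal hjm)) //= big1 ?addr0.
    rewrite ej subnn expr0 mulmx1 -!mulmxA (mulmxA phi) h1 mulmx1 => ->.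
    by [].
  move=> t ht; have htl : (t < j)%N.
    have := ltn_ord t; rewrite ej => /(_) ?.
    by rewrite ltn_neqAle -ltnS prednK // ltn_ord andbT; apply/eqP=> e; move/eqP: ht; apply; apply/val_inj; rewrite /= e.
  rewrite -!mulmxA (mulmxA (y ^+ (m.-1 - t))) mulmxX (pow_big (k := (m.-1 - t + j)%N)) ?mul0mx ?mulmx0 ?mulmx0 ?mulmx0 //; lia.
case: (leqP (m.-1 - d) j) => hj'; first exact: IH.
have hjm : (j < m)%N by lia.
have := congr1 (mulmx^~ (y ^+ j *m v)) hT; rewrite mul0mx /Theta mulmx_suml.
rewrite (bigD1 (Ordinal hjm)) //= big1 ?addr0.
  rewrite -!mulmxA (mulmxA (y ^+ (m.-1 - j)) (y ^+ j)) mulmxX.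
  have -> : (m.-1 - j + j = m.-1)%N by lia.
  by rewrite !mulmxA -(mulmxA _ phi) -(mulmxA _ (phi *m _)) h1 mulmx1 => ->.
move=> t ht; case: (ltnP t j) => htj.
  rewrite -!mulmxA (mulmxA (y ^+ (m.-1 - t))) mulmxX (pow_big (k := (m.-1 - t + j)%N)) ?mul0mx ?mulmx0 ?mulmx0 ?mulmx0 //; lia.
have htj' : (j < t)%N.
  by rewrite ltn_neqAle htj andbT; apply/eqP=> e; move/eqP: ht; apply; apply/val_inj; rewrite /= e.
by rewrite !mulmxA (IH t) ?mul0mx //; lia.
Qed.

Lemma theta_rank (w : 'cV[F]_N) : (\rank (Theta (w *m phi)) <= m)%N.
Proof.
pose A := \matrix_(i < N, j < m) (y ^+ j *m w) i 0.
pose B := \matrix_(j < m, k < N) (phi *m y ^+ (m.-1 - j)) 0 k.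
have -> : Theta (w *m phi) = A *m B.
  apply/matrixP => i k; rewrite /Theta summxE mxE; apply: eq_bigr => j _.
  have -> : y ^+ j *m (w *m phi) *m y ^+ (m.-1 - j) =
            (y ^+ j *m w) *m (phi *m y ^+ (m.-1 - j)) by rewrite !mulmxA.
  by rewrite [LHS]mxE big_ord1 /A /B !mxE.
by apply: leq_trans (mxrankM_maxl _ _) _; apply: rank_leq_col.
Qed.

Definition thetaf (u : 'rV[F]_N) : 'rV[F]_(N * N) := mxvec (Theta (u^T *m phi)).

Fact thetaf_semilinear : semilinear thetaf.
Proof.
split=> [a u|u1 u2]; rewrite /thetaf /Theta.
  rewrite -[RHS]linearZ /=; congr mxvec; rewrite scaler_sumr.
  apply: eq_bigr => j _; rewrite linearZ /=. by do 3! rewrite -?scalemxAl -?scalemxAr.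
rewrite linearD /= mulmxDl -linearD /=; congr mxvec.
by rewrite -big_split /=; apply: eq_bigr => j _; rewrite mulmxDr mulmxDl.
Qed.

HB.instance Definition _ :=
  GRing.isSemilinear.Build F 'rV[F]_N 'rV[F]_(N * N) _ thetaf thetaf_semilinear.

End Theta.

Lemma lb N m (y : 'M[F]_N) : (0 < m)%N -> y ^+ m = 0 -> y ^+ m.-1 != 0 ->
  (N + (m < N) <= \rank (cent_mx (mxvec y)))%N.
Proof.
move=> hm0 hm hm1.
case: (pickP (fun ab : 'I_N * 'I_N => (y ^+ m.-1) ab.1 ab.2 != 0)) => [[a b] /= hab|h0];
  last by case/negP: hm1; apply/eqP/matrixP => i j; have := h0 (i, j); rewrite /= mxE => /negbFE/eqP.
pose v : 'cV[F]_N := delta_mx b 0.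
pose phi : 'rV[F]_N := ((y ^+ m.-1) a b)^-1 *: delta_mx 0 a.
have h1 : phi *m y ^+ m.-1 *m v = 1%:M.
  rewrite /phi /v -!scalemxAl -rowE -colE; apply/matrixP => i j.
  by rewrite !ord1 !mxE mulVf.
set C := cent_mx (mxvec y).
set Fm := lin1_mx (thetaf m y phi).
have hF u : u *m Fm = thetaf m y phi u by rewrite mul_rV_lin1.
have hk : kermx Fm == 0.
  apply/rowV0P => u /sub_kermxP; rewrite hF /thetaf => /eqP; rewrite mxvec_eq0 => /eqP hT.
  have := theta_inj hm h1 hm0 hT => /(congr1 trmx); rewrite trmxK => ->.
  by apply/matrixP => i j; rewrite !mxE.
have hN : (N <= \rank Fm)%N.
  by have := mxrank_ker Fm; rewrite (eqP hk) mxrank0 => /esym/eqP; rewrite subn_eq0.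
have hFC : (Fm <= C)%MS.
  apply/row_subP => i; rewrite rowE hF /thetaf; apply/cent_rowP => k.
  by rewrite row_id mxvecK /= theta_comm.
case: (ltnP m N) => hmN; last by rewrite addn0; apply: leq_trans hN (mxrankS hFC).
have h1C : (mxvec (1%:M : 'M[F]_N) <= C)%MS.
  by apply/cent_rowP => k; rewrite row_id mxvecK /= mul1mx mulmx1.
have hn : ~~ (mxvec (1%:M : 'M[F]_N) <= Fm)%MS.
  apply/negP => /submxP [D hD]; rewrite hF in hD.
  have := congr1 vec_mx hD; rewrite /thetaf !mxvecK => e.
  have := theta_rank m y phi D^T; rewrite -e mxrank1; lia.
have hlt : (\rank Fm < \rank (Fm + mxvec (1%:M : 'M[F]_N))%MS)%N.
  apply: rank_ltmx; rewrite ltmxE addsmxSl /= addsmx_sub submx_refl /=; exact: hn.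
have hle : (\rank (Fm + mxvec (1%:M : 'M[F]_N))%MS <= \rank C)%N.
  by apply: mxrankS; rewrite addsmx_sub hFC h1C.
rewrite addn1; apply: leq_trans hle; apply: leq_ltn_trans hlt; exact: hN.
Qed.

End Dim.



Section Block.
Variable n : nat.

Definition offb (k : 'M[CC]_n.+1) :=
  forall i j : 'I_n.+1, (i == ord_max) != (j == ord_max) -> k i j = 0.

Lemma lift_widen (i : 'I_n) : lift ord_max i = widen_ord (leqnSn n) i.
Proof. by apply/val_inj; rewrite /= /bump leqNgt ltn_ord. Qed.

Lemma val_lift_max (i : 'I_n) : (lift ord_max i : nat) = i.
Proof. by rewrite lift_widen. Qed.

Lemma lift_neq (i : 'I_n) : (lift ord_max i == ord_max) = false.
Proof. by apply/negbTE; rewrite eq_sym neq_lift. Qed.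

Lemma corner_mulr (A k : 'M[CC]_n.+1) : offb k ->
  corner (A *m k) = corner A *m corner k.
Proof.
move=> hk; apply/matrixP => i j; rewrite !mxE big_ord_recr /=.
rewrite [k ord_max _]hk ?mulr0 ?addr0 ?eqxx ?lift_neq //.
by apply: eq_bigr => l _; rewrite /corner !mxE -lift_widen.
Qed.

Lemma corner_mull (A k : 'M[CC]_n.+1) : offb k ->
  corner (k *m A) = corner k *m corner A.
Proof.
move=> hk; apply/matrixP => i j; rewrite !mxE big_ord_recr /=.
rewrite [k _ ord_max]hk ?mul0r ?addr0 ?eqxx ?lift_neq //.
by apply: eq_bigr => l _; rewrite /corner !mxE -lift_widen.
Qed.

Lemma corner1 : corner (1%:M : 'M[CC]_n.+1) = 1%:M.
Proof. by apply/matrixP => i j; rewrite !mxE (inj_eq (@lift_inj _ _)). Qed.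

Lemma corner_tr (A : 'M[CC]_n.+1) : corner A^T = (corner A)^T.
Proof. by apply/matrixP => i j; rewrite !mxE. Qed.

Lemma embed_tr (A : 'M[CC]_n) : embed A^T = (embed A)^T.
Proof.
apply/matrixP => i j; rewrite !mxE.
by case: (unlift ord_max i) => [i'|]; case: (unlift ord_max j) => [j'|] //; rewrite mxE.
Qed.

Lemma embed_lift (A : 'M[CC]_n) i j : embed A (lift ord_max i) (lift ord_max j) = A i j.
Proof. by rewrite mxE !liftK. Qed.

Lemma embed_maxr (A : 'M[CC]_n) i : embed A i ord_max = 0.
Proof. by rewrite mxE unlift_none; case: (unlift _ _). Qed.

Lemma embed_maxl (A : 'M[CC]_n) j : embed A ord_max j = 0.
Proof. by rewrite mxE unlift_none. Qed.

Lemma embed_mulr (A : 'M[CC]_n) (k : 'M[CC]_n.+1) : offb k ->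
  embed A *m k = embed (A *m corner k).
Proof.
move=> hk; apply/matrixP => i j; rewrite !mxE big_ord_recr /= embed_maxr mul0r addr0.
case: (unliftP ord_max i) => [i'|] -> ; last first.
  by rewrite big1 // => l _; rewrite embed_maxl mul0r.
case: (unliftP ord_max j) => [j'|] -> ; last first.
  rewrite big1 // => l _; rewrite hk ?mulr0 // -lift_widen lift_neq eqxx //.
rewrite mxE; apply: eq_bigr => l _; rewrite -lift_widen embed_lift mxE.
by [].
Qed.

Lemma embed_mull (A : 'M[CC]_n) (k : 'M[CC]_n.+1) : offb k ->
  k *m embed A = embed (corner k *m A).
Proof.
move=> hk; apply: trmx_inj; rewrite trmx_mul -!embed_tr embed_mulr.
  by rewrite trmx_mul corner_tr.
by move=> i j h; rewrite mxE hk // eq_sym.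
Qed.

Definition colc (t : 'M[CC]_n.+1) : 'cV[CC]_n := \col_i t (lift ord_max i) ord_max.

Lemma core (Y : 'M[CC]_n) (t : 'M[CC]_n.+1) :
  embed Y *m t = t *m embed Y -> Y *m colc t = 0.
Proof.
move=> /matrixP h; apply/matrixP => i j; rewrite ord1.
have := h (lift ord_max i) ord_max; rewrite !mxE.
rewrite [X in _ = X]big1; last by move=> l _; rewrite embed_maxr mulr0.
rewrite big_ord_recr embed_maxr mul0r /= addr0 => e.
apply: etrans e; apply: eq_bigr => l _.
by rewrite -lift_widen embed_lift mxE.
Qed.

End Block.



Section Gen.
Variable F : fieldType.

Lemma snz_pow N (y : 'M[F]_N.+1) : supper y ->
  (forall i j : 'I_N.+1, (j = i.+1 :> nat) -> y i j != 0) -> y ^+ N != 0.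
Proof.
move=> hy hsd; apply/negP => /eqP/matrixP/(_ 0 ord_max); rewrite mxE (spowd hy) //.
move/eqP; rewrite prodf_seq_eq0 => /hasP [t _ /= /eqP]; apply/eqP.
have ht := ltn_ord t; apply: hsd; rewrite /= !inordK //; lia.
Qed.

Lemma trX N (A : 'M[F]_N) e : (A^T) ^+ e = (A ^+ e)^T.
Proof.
elim: e => [|e IH]; first by rewrite !expr0 trmx1.
by rewrite exprSr exprS -!mulmxE trmx_mul IH.
Qed.

Lemma conjX N (P a b : 'M[F]_N) e : P \in unitmx -> P *m a = b *m P ->
  b ^+ e = P *m a ^+ e *m invmx P.
Proof.
move=> hP hPa; elim: e => [|e IH]; first by rewrite !expr0 mulmx1 mulmxV.
rewrite exprSr -mulmxE IH exprSr -mulmxE.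
have -> : b = P *m a *m invmx P by rewrite hPa mulmxK.
by rewrite !mulmxA mulmxKV.
Qed.

Lemma conj_comm N (P a b M : 'M[F]_N) : P \in unitmx -> P *m a = b *m P ->
  M *m b = b *m M ->
  (invmx P *m M *m P) *m a = a *m (invmx P *m M *m P).
Proof.
move=> hP hPa hM.
have ha : a = invmx P *m b *m P by rewrite -mulmxA -hPa mulKmx.
rewrite {1}ha !mulmxA mulmxK // -(mulmxA _ M b) hM mulmxA.
by rewrite ha ?mulmxA mulmxK.
Qed.

End Gen.


Unset Implicit Arguments.


Theorem proposition3p11 (n : nat) (hn : (0 < n)%N) (x : 'M[CC]_n.+1) :
  regular_nilpotent x ->
  (in_borel_Qplus x \/ in_borel_Qminus x) ->
  regular_nilpotent (corner x) /\
  (forall y : 'M[CC]_n,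
      y *m corner x = corner x *m y ->
      embed y *m x = x *m embed y ->
      y = 0).
Proof.
case: n hn x => [//|n] _ x.
move=> [[e he] hreg] hB.
have hxn : x ^+ n.+1 != 0.
  apply/negP => /eqP hx0.
  pose P := fun m => x ^+ m == 0.
  have exP : exists m, P m by exists e; apply/eqP.
  have [m hm hmin] := ex_minnP exP.
  have hm0 : (0 < m)%N.
    by case: (posnP m) hm => // ->; rewrite /P expr0 oner_eq0.
  have hm1 : x ^+ m.-1 != 0.
    by apply/negP => h; have := hmin _ h; lia.
  have hmN : (m < n.+2)%N by have := hmin n.+1 (introT eqP hx0); lia.
  have := lb hm0 (eqP hm) hm1; rewrite hmN.
  by move: hreg; rewrite /regular_mx /centralizer_dim => ->; lia.
have [k [[hku hkb] hcase]] : exists k, in_K k /\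
    (upper_tri (invmx k *m x *m k) \/ lower_tri (invmx k *m x *m k)).
  by case: hB => [[k hk h]|[k hk h]]; exists k; split=> //; [left|right].
set x' := invmx k *m x *m k.
have hkx : k *m x' = x *m k by rewrite /x' !mulmxA mulmxV // mul1mx.
have hx'nil : x' ^+ e = 0.
  have := conjX e hku hkx; rewrite he => /(congr1 (fun M => invmx k *m M *m k)).
  by rewrite mulmx0 mul0mx !mulmxA mulVmx // mul1mx mulmxKV.
have hx'n : x' ^+ n.+1 != 0.
  by apply/negP => /eqP h; move/negP: hxn; apply; rewrite (conjX _ hku hkx) h mulmx0 mul0mx.
have [t [ht [ht1 ht2]]] : exists t : 'M[CC]_n.+2, supper t /\
    (forall i j : 'I_n.+2, (j = i.+1 :> nat) -> t i j != 0) /\ (x' = t \/ x' = t^T).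
  case: hcase => [hup|hlo].
    have hs : supper x' := upper_nil hup hx'nil.
    by exists x'; split=> //; split; [exact: super_nz hs hx'n | left].
  have hup : upper x'^T by move=> i j h; rewrite mxE hlo.
  have hs : supper x'^T.
    by apply: (upper_nil (k := e) hup); rewrite trX hx'nil trmx0.
  exists x'^T; split=> //; split; last by right; rewrite trmxK.
  apply: super_nz hs _; rewrite trX; apply: contra hx'n => /eqP h.
  by apply/eqP/trmx_inj; rewrite h trmx0.
set tn := corner t; set kn := corner k; set xn := corner x.
have hknu : kn \in unitmx.
  have := corner_mulr (invmx k) hkb; rewrite mulVmx // corner1 => /esym/mulmx1_unit [].
  by [].
have hkxn : kn *m corner x' = xn *m kn by rewrite -corner_mull // hkx corner_mulr.
have htn : supper tn.
  by move=> i j h; rewrite mxE ht // !val_lift_max.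
have htn2 (i j : 'I_n.+1) : (j = i.+1 :> nat) -> tn i j != 0.
  by move=> h; rewrite mxE; apply: ht1; rewrite !val_lift_max.
have htnN : tn ^+ n.+1 = 0.
  by apply/matrixP => a b; rewrite [RHS]mxE spow0 //; have := ltn_ord b; lia.
have htn1 : tn ^+ n != 0 := snz_pow htn htn2.
have hcx : corner x' = tn \/ corner x' = tn^T.
  by case: ht2 => ->; [left|right; rewrite corner_tr].
have hcx'N : corner x' ^+ n.+1 = 0.
  by case: hcx => ->; rewrite ?trX htnN ?trmx0.
have hcx'1 : corner x' ^+ n != 0.
  case: hcx => -> //; rewrite trX; apply: contra htn1 => /eqP h.
  by apply/eqP/trmx_inj; rewrite h trmx0.
have hxnX j : xn ^+ j = kn *m corner x' ^+ j *m invmx kn := conjX j hknu hkxn.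
have hxnN : xn ^+ n.+1 = 0 by rewrite hxnX hcx'N mulmx0 mul0mx.
have hxn1 : xn ^+ n != 0.
  apply: contra hcx'1 => /eqP h; apply/eqP.
  have := hxnX n; rewrite h => /(congr1 (fun M => invmx kn *m M *m kn)).
  by rewrite mulmx0 mul0mx !mulmxA mulVmx // mul1mx mulmxKV.
set c := colc t.
have hc : c ord_max 0 != 0 by rewrite mxE; apply: ht1; rewrite val_lift_max.
have hsep M : M *m tn = tn *m M -> M *m c = 0 -> M = 0 := sep htn htn2 hc.
have back M : invmx kn *m M *m kn = 0 -> M = 0.
  move=> h; have <- : kn *m (invmx kn *m M *m kn) *m invmx kn = M.
    by rewrite !mulmxA mulmxV // mul1mx mulmxK.
  by rewrite h mulmx0 mul0mx.
split.
  split; first by exists n.+1.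
  apply/eqP; rewrite eqn_leq; apply/andP; split; last first.
    by have := lb (ltn0Sn n) hxnN hxn1; rewrite ltnn addn0.
  case: hcx => ex.
    rewrite -[X in (_ <= X)%N](muln1 n.+1).
    apply: (ub (f := mulmxr (kn *m c))) => M hM /= hMv; apply: back.
    have := conj_comm hknu hkxn hM; rewrite ex => hc'.
    by apply: hsep => //; rewrite -!mulmxA hMv mulmx0.
  rewrite -[X in (_ <= X)%N](mul1n n.+1).
  apply: (ub (f := mulmx (c^T *m invmx kn))) => M hM /= hMv; apply: back.
  have := conj_comm hknu hkxn hM; rewrite ex => hc'.
  apply: trmx_inj; rewrite trmx0; apply: hsep.
    by rewrite -[tn]trmxK -!trmx_mul hc'.
  by rewrite -[c]trmxK -trmx_mul !mulmxA hMv mul0mx trmx0.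
move=> y hy hey.
set y' := invmx kn *m y *m kn.
have hy' : y' *m corner x' = corner x' *m y' := conj_comm hknu hkxn hy.
have hkz : k *m embed y' = embed y *m k.
  by rewrite embed_mull // embed_mulr //; congr embed; rewrite /y' !mulmxA mulmxV // mul1mx.
have hz : embed y' *m x' = x' *m embed y'.
  have h : k *m (embed y' *m x') = k *m (x' *m embed y').
    rewrite mulmxA hkz -mulmxA hkx mulmxA hey -mulmxA -hkz mulmxA -hkx.
    by rewrite -mulmxA.
  by have := congr1 (mulmx (invmx k)) h; rewrite !mulKmx.
apply: back; rewrite -/y'.
case: ht2 => ex.
  apply: hsep; first by rewrite /tn -ex.
  by rewrite ex in hz; exact: core hz.
apply: trmx_inj; rewrite trmx0; apply: hsep.
  have : corner x' = tn^T by rewrite ex corner_tr.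
  move=> e'; rewrite e' in hy'.
  by rewrite -[tn]trmxK -!trmx_mul hy'.
apply: core; rewrite embed_tr -[t]trmxK -!trmx_mul -ex hz.
by [].
Qed.
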